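(* Let $(\Omega,\mathcal F)$ be a measurable space with $\Sigma\neq\emptyset$, $\nu$ a finite measure, and $\mu$ a finite measure with $\mu\ll\nu$. Let $F_\mu(y)=\nu(\{\omega:\frac{d\mu}{d\nu}(\omega)\le y\})$ and $v_\mu(A)=\int_0^\infty\min(\nu(\Omega)-F_\mu(z),\nu(A))\,dz$. For a non-negative measurable $f:\Omega\to[0,\infty)$ let $F_f(z)=\nu(\{\omega:f(\omega)\le z\})$ ($z\ge0$). Then $$v_\mu(f)=\int_0^{\nu(\Omega)}F_\mu^{-1}(\beta)\,F_f^{-1}(\beta)\,d\beta,$$ where $v_\mu(f)=\int_0^\infty v_\mu(\{\omega:f(\omega)>z\})\,dz$ and, for $F\in\{F_\mu,F_f\}$, $F^{-1}(\beta)=\inf\{z\ge0:F(z)>\beta\}$.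
   Context: $\Sigma$ denotes the set of all classes $\mathcal I\subset\mathcal F$ that are chains (totally ordered by inclusion), contain $\emptyset$ and $\Omega$, and generate $\mathcal F$ as a $\sigma$-algebra. $\frac{d\mu}{d\nu}$ is the non-negative Radon–Nikodym derivative. *)

(* Defs.v *)
From HB Require Import structures.
From mathcomp Require Import all_boot all_order all_algebra.
From mathcomp Require Import all_classical all_reals all_analysis.
Set Implicit Arguments. Unset Strict Implicit. Unset Printing Implicit Defensive.
Import Order.TTheory GRing.Theory Num.Theory.
Local Open Scope classical_set_scope.
Local Open Scope ring_scope.

Definition Sigma_classes {d} {T : measurableType d} : set (set (set T)) :=
  [set I | [/\ I `<=` measurable,
            (forall A B, I A -> I B -> A `<=` B \/ B `<=` A),
            I set0, I setT &
            <<s I >> = @measurable d T]].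

(* generalised inverse: F^{-1}(b) = inf { z >= 0 | F z > b } (inf of the
   empty set is +oo) *)
Definition gen_inv {R : realType} (F : R -> \bar R) (b : R) : \bar R :=
  ereal_inf (EFin @` [set z : R | 0 <= z /\ (b%:E < F z)%E]).

Definition F_mu {d} {T : measurableType d} {R : realType}
  (nu : {finite_measure set T -> \bar R}) (mu : {finite_measure set T -> \bar R})
  (y : R) : \bar R :=
  nu [set w | (Radon_Nikodym (charge_of_finite_measure mu) nu w <= y%:E)%E].

Definition F_fun {d} {T : measurableType d} {R : realType}
  (nu : {finite_measure set T -> \bar R}) (f : T -> R) (z : R) : \bar R :=
  nu [set w | f w <= z].

Definition v_mu {d} {T : measurableType d} {R : realType}
  (nu : {finite_measure set T -> \bar R}) (mu : {finite_measure set T -> \bar R})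
  (A : set T) : \bar R :=
  (\int[@lebesgue_measure R]_(z in `[0%R, +oo[)
     Order.min (nu setT - F_mu nu mu z) (nu A))%E.

Definition v_mu_fun {d} {T : measurableType d} {R : realType}
  (nu : {finite_measure set T -> \bar R}) (mu : {finite_measure set T -> \bar R})
  (f : T -> R) : \bar R :=
  (\int[@lebesgue_measure R]_(z in `[0%R, +oo[)
     v_mu nu mu [set w | (z < f w)%R])%E.

(* Main.v *)
Require Import Defs.
From HB Require Import structures.
From mathcomp Require Import all_boot all_order all_algebra.
From mathcomp Require Import all_classical all_reals all_analysis.
From mathcomp Require Import measurable_realfun.
Import Order.TTheory GRing.Theory Num.Theory.
Local Open Scope classical_set_scope.
Local Open Scope ring_scope.

Section helpers.
Context {R : realType}.
Local Notation leb := (@lebesgue_measure R).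

Lemma nd_fin_measurable (F : R -> \bar R) :
  (forall z, F z \is a fin_num) -> {homo F : x y / x <= y >-> (x <= y)%E} ->
  measurable_fun [set: R] F.
Proof.
move=> Ff ndF.
have -> : F = EFin \o (fine \o F) by apply/funext => z; rewrite /= fineK.
apply/measurable_EFinP; apply: nondecreasing_measurable => // x y xy.
by rewrite /= fine_le// ndF.
Qed.

Lemma gen_inv_leb (F : R -> \bar R) (b : R) :
  measurable_fun [set: R] F -> {homo F : x y / x <= y >-> (x <= y)%E} ->
  gen_inv F b = leb ([set z | (F z <= b%:E)%E] `&` `[0%R, +oo[).
Proof.
move=> mF ndF.
have mA : measurable ([set z | (F z <= b%:E)%E] `&` `[0%R, +oo[).
  rewrite setIC; apply: measurable_lee => //.
  exact: measurable_funS mF.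
rewrite /gen_inv.
set S := [set z : R | 0 <= z /\ (b%:E < F z)%E].
have [S0|/set0P[s Ss]] := eqVneq S set0.
  rewrite S0 image_set0 ereal_inf0.
  have -> : [set z | (F z <= b%:E)%E] `&` `[0%R, +oo[ = `[0%R, +oo[%classic.
    apply/seteqP; split => z; first by case.
    move=> z0; split => //; rewrite /=; rewrite leNgt; apply/negP => bz.
    have : S z by split => //; move: z0; rewrite /= in_itv /= andbT.
    by rewrite S0.
  by rewrite lebesgue_measure_itv /= ltry.
have c0 : (0 <= ereal_inf (EFin @` S))%E.
  apply: le_ereal_inf_tmp => _ [z [z0 _] <-]; by rewrite lee_fin.
have cs : (ereal_inf (EFin @` S) <= s%:E)%E.
  by apply: ereal_inf_lbound; exists s.
have : ereal_inf (EFin @` S) \is a fin_num.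
  by rewrite fin_numE; apply/andP; split; [rewrite gt_eqF// (lt_le_trans _ c0)// ltNyr|rewrite lt_eqF// (le_lt_trans cs)// ltry].
move/fineK; set r := fine _ => rE.
rewrite -rE in c0 *; rewrite lee_fin in c0.
have h1 : leb `[0%R, r[%classic = r%:E.
  rewrite lebesgue_measure_itv /= lte_fin oppr0 addr0; case: ifPn => // /negP r0; have -> // : r = 0 by apply/le_anti; rewrite c0 andbT leNgt; exact/negP.
have h2 : leb `[0%R, r]%classic = r%:E.
  rewrite lebesgue_measure_itv /= lte_fin oppr0 addr0; case: ifPn => // /negP r0; have -> // : r = 0 by apply/le_anti; rewrite c0 andbT leNgt; exact/negP.
apply/eqP; rewrite eq_le; apply/andP; split.
- rewrite -[X in (X <= _)%E]h1; apply: le_measure.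
  + by rewrite inE; exact: measurable_itv.
  + by rewrite inE.
  + move=> z; rewrite /= !in_itv /= => /andP[z0 zr]; split; last by rewrite z0.
    rewrite /= leNgt; apply/negP => bz.
    have : (ereal_inf (EFin @` S) <= z%:E)%E by apply: ereal_inf_lbound; exists z.
    by rewrite -rE lee_fin leNgt zr.
- rewrite -[X in (_ <= X)%E]h2; apply: le_measure.
  + by rewrite inE.
  + by rewrite inE; exact: measurable_itv.
  + move=> z [/= Fzb]; rewrite /= !in_itv /= !andbT => z0; rewrite z0 /=.
    rewrite leNgt; apply/negP => rz.
    have : (ereal_inf (EFin @` S) < z%:E)%E by rewrite -rE lte_fin.
    move=> /ereal_inf_lt [_ [y [y0 by'] <-]]; rewrite lte_fin => yz.
    have := ndF _ _ (ltW yz).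
    by move=> /(lt_le_trans by') /(le_lt_trans Fzb); rewrite ltxx.
Qed.


Lemma min_integral (n : R) (X Y : \bar R) :
  (0 <= X <= n%:E)%E -> (0 <= Y <= n%:E)%E ->
  (\int[leb]_(b in `[0%R, n]) ((\1_[set b | (X <= b%:E)%E] b)%:E *
      (\1_[set b | (Y <= b%:E)%E] b)%:E))%E =
  Order.min (n%:E - X)%E (n%:E - Y)%E.
Proof.
move=> /andP[X0 Xn] /andP[Y0 Yn].
have Xf : X \is a fin_num by rewrite ge0_fin_numE// (le_lt_trans Xn)// ltry.
have Yf : Y \is a fin_num by rewrite ge0_fin_numE// (le_lt_trans Yn)// ltry.
rewrite -(fineK Xf) -(fineK Yf) in X0 Xn Y0 Yn *.
move: (fine X) (fine Y) X0 Xn Y0 Yn => x y; rewrite !lee_fin => x0 xn y0 yn.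
under eq_integral => b _.
  rewrite -EFinM (_ : (_ * _)%R = \1_([set b | (x%:E <= b%:E)%E] `&` [set b | (y%:E <= b%:E)%E]) b); last by rewrite indicI.
  over.
rewrite integral_indic//; last first.
  apply: measurableI.
  - rewrite (_ : [set b | _] = `[x, +oo[%classic); first exact: measurable_itv.
    by apply/seteqP; split => b; rewrite /= in_itv /= andbT lee_fin.
  - rewrite (_ : [set b | _] = `[y, +oo[%classic); first exact: measurable_itv.
    by apply/seteqP; split => b; rewrite /= in_itv /= andbT lee_fin.
have -> : [set b | (x%:E <= b%:E)%E] `&` [set b | (y%:E <= b%:E)%E] `&` `[0%R, n]%classic
   = `[Num.max x y, n]%classic.
  apply/seteqP; split => b.
  - by move=> [[/= xb yb]]; rewrite /= !in_itv /= => /andP[_ ->]; rewrite ge_max -!lee_fin xb yb.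
  - rewrite /= !in_itv /= ge_max => /andP[/andP[xb yb] bn]; rewrite !lee_fin xb yb bn.
    by split => //; rewrite (le_trans x0 xb).
transitivity (@lebesgue_measure R `[Num.max x y, n]%classic); first by [].
rewrite lebesgue_measure_itv /= lte_fin.
have mn : Num.max x y <= n by rewrite ge_max xn yn.
rewrite -EFin_min; case: ifPn => [_|]; last first.
  rewrite -leNgt => nm; have e : Num.max x y = n by apply/le_anti; rewrite mn nm.
  congr EFin; move: e; case: (leP x y) => xy e; subst n.
    by rewrite subrr min_r// subr_ge0.
  by rewrite subrr min_l// subr_ge0 ltW.
congr EFin; case: (leP x y) => xy.
  by rewrite min_r// lerB.
by rewrite min_l// lerB// ltW.
Qed.


Lemma fubini_dom (A B : set R) (g : R -> R -> \bar R) :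
  measurable A -> measurable B ->
  measurable_fun [set: R * R] (fun p => g p.1 p.2) -> (forall x y, (0 <= g x y)%E) ->
  (\int[leb]_(x in A) \int[leb]_(y in B) g x y =
   \int[leb]_(y in B) \int[leb]_(x in A) g x y)%E.
Proof.
move=> mA mB mg g0.
pose h := (fun p : R * R => g p.1 p.2) \_ (A `*` B).
have mh : measurable_fun [set: R * R] h.
  apply/(measurable_restrictT _ _).1; first exact: measurableX.
  exact: measurable_funS mg.
have h0 p : (0 <= h p)%E by rewrite /h /patch; case: ifPn.
rewrite integral_mkcond [RHS]integral_mkcond.
transitivity (\int[leb]_x \int[leb]_y h (x, y))%E.
  apply: eq_integral => x _; rewrite /patch; case: ifPn => xA.
    rewrite [LHS]integral_mkcond; apply: eq_integral => y _.
    by rewrite /h /patch in_setX /= xA.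
  by apply/esym/integral0_eq => y _; rewrite /h /patch in_setX /= (negbTE xA).
transitivity (\int[leb]_y \int[leb]_x h (x, y))%E.
  exact: fubini_tonelli.
apply: eq_integral => y _; rewrite /patch; case: ifPn => yB.
  rewrite [RHS]integral_mkcond; apply: eq_integral => x _.
  by rewrite /h /patch in_setX /= yB andbT.
by apply/integral0_eq => x _; rewrite /h /patch in_setX /= (negbTE yB) andbF.
Qed.


Definition Ind (F : R -> \bar R) (p : R * R) : \bar R :=
  (\1_[set p : R * R | (F p.1 <= p.2%:E)%E] p)%:E.

Lemma Ind_ge0 F p : (0 <= Ind F p)%E.
Proof. by rewrite /Ind lee_fin /indic; case: (_ \in _). Qed.

Lemma measurable_Ind F : measurable_fun [set: R] F -> measurable_fun [set: R * R] (Ind F).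
Proof.
move=> mF; apply/measurable_EFinP; apply: measurable_indic.
rewrite -(setTI [set p : R * R | _]).
apply: measurable_lee => //.
- exact: measurableT_comp mF measurable_fst.
- by apply/measurable_EFinP; exact: measurable_snd.
Qed.

Lemma measurable_Ind2 F : measurable_fun [set: R] F ->
  measurable_fun [set: R * R] (fun p : R * R => Ind F (p.1, p.2)).
Proof.
move=> mF; have -> : (fun p : R * R => Ind F (p.1, p.2)) = Ind F by apply/funext => -[].
exact: measurable_Ind.
Qed.

Lemma indic_iff {T1 T2 : Type} (A : set T1) (B : set T2) x y :
  (A x <-> B y) -> (\1_A x : R) = \1_B y.
Proof.
move=> [AB BA]; rewrite /indic; congr (_%:R).
have [xA|xA] := boolP (x \in A); have [yB|yB] := boolP (y \in B) => //.
- by move/set_mem: xA => /AB /mem_set; rewrite (negbTE yB).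
- by move/set_mem: yB => /BA /mem_set; rewrite (negbTE xA).
Qed.

Lemma gen_inv_Ind (F : R -> \bar R) (b : R) :
  measurable_fun [set: R] F -> {homo F : x y / x <= y >-> (x <= y)%E} ->
  gen_inv F b = (\int[leb]_(z in `[0%R, +oo[) Ind F (z, b))%E.
Proof.
move=> mF ndF; rewrite gen_inv_leb//.
transitivity (\int[leb]_(z in `[0%R, +oo[) (\1_[set z | (F z <= b%:E)%E] z)%:E)%E; last first.
  by apply: eq_integral => z _; rewrite /Ind (@indic_iff _ _ _ [set p : R * R | (F p.1 <= p.2%:E)%E] z (z, b)).
rewrite integral_indic//.
rewrite -(setTI [set z | _]); apply: measurable_lee => //.
Qed.

End helpers.

Theorem proposition17 (d : measure_display) (T : measurableType d) (R : realType)
  (nu : {finite_measure set T -> \bar R})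
  (mu : {finite_measure set T -> \bar R})
  (f : T -> R) :
  @Sigma_classes d T !=set0 ->
  charge_of_finite_measure mu `<< nu ->
  measurable_fun setT f ->
  (forall w, 0 <= f w) ->
  v_mu_fun nu mu f =
  (\int[@lebesgue_measure R]_(b in `[0%R, fine (nu setT)])
     (gen_inv (F_mu nu mu) b * gen_inv (F_fun nu f) b))%E.
Proof.
move=> _ numu mf f0.
set N := nu setT.
have Nfin : N \is a fin_num by apply: fin_num_measure.
set n := fine N.
have hN : N = n%:E by rewrite fineK.
set g := Radon_Nikodym (charge_of_finite_measure mu) nu.
have mg : measurable_fun setT g := measurable_int _ (Radon_Nikodym_integrable numu).
pose Pm z := [set w | (g w <= z%:E)%E].
pose Pf t := [set w | f w <= t].
have mPm z : measurable (Pm z).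
  by rewrite -(setTI (Pm z)); apply: measurable_lee.
have mPf t : measurable (Pf t).
  rewrite (_ : Pf t = [set w | ((f w)%:E <= t%:E)%E]); last first.
    by apply/seteqP; split => w /=; rewrite lee_fin.
  rewrite -(setTI [set w | _]); apply: measurable_lee => //.
  exact/measurable_EFinP.
have ndPm x y : x <= y -> Pm x `<=` Pm y.
  by move=> xy w /= /le_trans; apply; rewrite lee_fin.
have ndPf x y : x <= y -> Pf x `<=` Pf y.
  by move=> xy w /= /le_trans; apply.
have props (P : R -> set T) : (forall z, measurable (P z)) ->
    (forall x y, x <= y -> P x `<=` P y) ->
    [/\ forall z, (0 <= nu (P z) <= N)%E, forall z, nu (P z) \is a fin_num &
       {homo (fun z => nu (P z)) : x y / x <= y >-> (x <= y)%E}].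
  move=> mP ndP; split.
  - by move=> z; rewrite measure_ge0 /= le_measure// inE.
  - by move=> z; apply: fin_num_measure.
  - by move=> x y xy; rewrite le_measure ?inE//; exact: ndP.
have [Fm_b Fm_fin Fm_nd] := props _ mPm ndPm.
have [Ff_b Ff_fin Ff_nd] := props _ mPf ndPf.
have mFm : measurable_fun [set: R] (F_mu nu mu) by exact: nd_fin_measurable.
have mFf : measurable_fun [set: R] (F_fun nu f) by exact: nd_fin_measurable.
have E1 t : nu [set w | t < f w] = (N - F_fun nu f t)%E.
  rewrite (_ : [set w | t < f w] = setT `\` Pf t); last first.
    apply/seteqP; split => w /=; rewrite /Pf /= ltNge; [by move=> /negP|by move=> [_ /negP]].
  by rewrite measureD// ?setTI// -ge0_fin_numE//; exact: fin_num_measure.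
have hN' : nu setT = n%:E := hN.
have Fm_b' z : (0 <= F_mu nu mu z <= n%:E)%E by rewrite -hN; exact: Fm_b.
have Ff_b' z : (0 <= F_fun nu f z <= n%:E)%E by rewrite -hN; exact: Ff_b.
set Fm := F_mu nu mu.
set Ff := F_fun nu f.
rewrite /v_mu_fun /v_mu.
transitivity (\int[@lebesgue_measure R]_(t in `[0%R, +oo[) \int[@lebesgue_measure R]_(z in `[0%R, +oo[)
   \int[@lebesgue_measure R]_(b in `[0%R, n]) (Ind Fm (z, b) * Ind Ff (t, b)))%E.
  apply: eq_integral => t _; apply: eq_integral => z _.
  rewrite E1 hN' (@min_integral R n _ _ (Fm_b' z) (Ff_b' t)).
  by rewrite hN.
transitivity (\int[@lebesgue_measure R]_(t in `[0%R, +oo[) \int[@lebesgue_measure R]_(b in `[0%R, n])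
   \int[@lebesgue_measure R]_(z in `[0%R, +oo[) (Ind Fm (z, b) * Ind Ff (t, b)))%E.
  apply: eq_integral => t _; apply: fubini_dom => //.
  - apply: emeasurable_funM; first exact: measurable_Ind2.
    have h := measurableT_comp (measurable_Ind _ mFf) (measurable_fun_pair (measurable_cst t) (@measurable_snd _ _ R R)).
    exact: h.
  - by move=> x y; rewrite mule_ge0// Ind_ge0.
pose Hm b := (\int[@lebesgue_measure R]_(z in `[0%R, +oo[) Ind Fm (z, b))%E.
have Hm0 b : (0 <= Hm b)%E by apply: integral_ge0 => z _; exact: Ind_ge0.
have mInd1 (F : R -> \bar R) (b : R) : measurable_fun [set: R] F ->
    measurable_fun (`[0%R, +oo[ : set R) (fun z : R => Ind F (z, b)).
  move=> mF; apply: measurable_funTS.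
  exact: measurableT_comp (measurable_Ind _ mF) (pair2_measurable b).
have mInd2 (F : R -> \bar R) (t : R) (D : set R) : measurable_fun [set: R] F ->
    measurable_fun D (fun b : R => Ind F (t, b)).
  move=> mF; apply: measurable_funTS.
  exact: measurableT_comp (measurable_Ind _ mF) (pair1_measurable t).
transitivity (\int[@lebesgue_measure R]_(t in `[0%R, +oo[) \int[@lebesgue_measure R]_(b in `[0%R, n])
   (Hm b * Ind Ff (t, b)))%E.
  apply: eq_integral => t _; apply: eq_integral => b _.
  apply: ge0_integralZr => //; first exact: mInd1.
  by move=> z _; exact: Ind_ge0.
  exact: Ind_ge0.
have mHm : measurable_fun [set: R] Hm.
  pose k := (fun p : R * R => Ind Fm (p.2, p.1)) \_ (setT `*` `[0%R, +oo[).
  have -> : Hm = fubini_F (@lebesgue_measure R) k.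
    apply/funext => b; rewrite /fubini_F /Hm [LHS]integral_mkcond.
    by apply: eq_integral => z _; rewrite /k /patch in_setX /= in_setT /= ?in_setT.
  apply: measurable_fun_fubini_tonelli_F.
  - apply/(measurable_restrictT _ _).1; first exact: measurableX.
    apply: measurable_funTS.
    exact: measurableT_comp (measurable_Ind _ mFm) (measurable_fun_pair measurable_snd measurable_fst).
  - by move=> p; rewrite /k /patch; case: ifPn => // _; exact: Ind_ge0.
transitivity (\int[@lebesgue_measure R]_(b in `[0%R, n]) \int[@lebesgue_measure R]_(t in `[0%R, +oo[)
   (Hm b * Ind Ff (t, b)))%E.
  apply: fubini_dom => //.
  - apply: emeasurable_funM; first exact: measurableT_comp mHm measurable_snd.
    exact: measurable_Ind2.
  - by move=> x y; rewrite mule_ge0// Ind_ge0.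
apply: eq_integral => b _.
rewrite ge0_integralZl//; first last.
- by move=> t _; exact: Ind_ge0.
- exact: (mInd1 _ _ mFf).
by rewrite /Hm !gen_inv_Ind.
Qed.
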